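(* Let $p,q$ be integers and $x,y$ non-negative integers with $2=\sigma(p^x-q^y)$ for some $\sigma\in\{1,-1\}$. Let $\alpha=\sum_{i=0}^{I}a_ip^i$ with $a_i\in\mathbb{Z}$, $I\in\mathbb{N}_0$, and put $w=\sum_{i=0}^I|a_i|$. Then, starting from this representation, after at most $\frac{w^2-w}{2}$ replacement steps one arrives at a representation $$\alpha=\sum_{j=0}^{J}q^{jy}\sum_{k=0}^{K}b_{k,j}p^k$$ with $J,K\in\mathbb{N}_0$ and integers $b_{k,j}$ satisfying $|b_{k,j}|\leq 1$.
   Context: Representations considered are finite sums $\alpha=\sum_{j\geq0}q^{jy}\sum_{k\geq 0}c_{k,j}p^k$ with integer coefficients $c_{k,j}$. A replacement step chooses $(k,j)$ with $|c_{k,j}|\geq 2$, writes $s=\operatorname{sign}(c_{k,j})$, replaces $c_{k,j}$ by $c_{k,j}-2s$, and uses $2p^kq^{jy}=\sigma(p^{k+x}q^{jy}-p^kq^{(j+1)y})$ to add $s\sigma$ to $c_{k+x,j}$ and $-s\sigma$ to $c_{k,j+1}$. *)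

(* Defs.v *)
From HB Require Import structures.
From mathcomp Require Import all_boot all_order all_algebra.
Set Implicit Arguments. Unset Strict Implicit. Unset Printing Implicit Defensive.
Import Order.TTheory GRing.Theory Num.Theory.
Local Open Scope ring_scope.

(* A representation  sum_{j>=0} q^{jy} sum_{k>=0} c k j p^k  is encoded by its
   coefficient function c : nat -> nat -> int (c k j = c_{k,j}). *)
Definition rep := nat -> nat -> int.

(* The sign s = sign(c) of a nonzero integer (used only when |c| >= 2). *)
Definition sgn (c : int) : int := if 0 < c then 1 else -1.

Definition replacement_step (sigma : int) (x : nat) (c c' : rep) : Prop :=
  exists k j : nat,
    2 <= `|c k j| /\
    let s := sgn (c k j) in
    forall k' j' : nat,
      c' k' j' = c k' j'
                 - (if (k' == k) && (j' == j) then 2 * s else 0)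
                 + (if (k' == (k + x)%N) && (j' == j) then s * sigma else 0)
                 - (if (k' == k) && (j' == j.+1) then s * sigma else 0).

Fixpoint replacement_steps (sigma : int) (x : nat) (n : nat) (c c' : rep) : Prop :=
  match n with
  | 0%N => c = c'
  | n'.+1 => exists c'' : rep,
      replacement_step sigma x c c'' /\ replacement_steps sigma x n' c'' c'
  end.

Definition initial_rep (a : nat -> int) (I : nat) : rep :=
  fun k j => if (j == 0%N) && (k <= I)%N then a k else 0.

(* Main.v *)
Require Import Defs.
From HB Require Import structures.
From mathcomp Require Import all_boot all_order all_algebra zify ring lra.
From Stdlib Require Import Classical.
Import Order.TTheory GRing.Theory Num.Theory.
Local Open Scope ring_scope.
Set Implicit Arguments. Unset Strict Implicit.

Definition supp (c : rep) (N : nat) := forall k i : nat, (N <= k)%N \/ (N <= i)%N -> c k i = 0.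
Definition rowW (c : rep) (j N : nat) : nat := (\sum_(k < N) `|c k j|%N)%N.
Definition val (p q : int) (y : nat) (c : rep) (N : nat) : int :=
  \sum_(i < N) \sum_(k < N) c k i * (q ^+ (i * y) * p ^+ k).
Definition mkstep (sigma : int) (x : nat) (c : rep) (k j : nat) : rep :=
  fun k' j' => c k' j'
                 - (if (k' == k) && (j' == j) then 2 * sgn (c k j) else 0)
                 + (if (k' == (k + x)%N) && (j' == j) then sgn (c k j) * sigma else 0)
                 - (if (k' == k) && (j' == j.+1) then sgn (c k j) * sigma else 0).

Lemma step_mk sigma x c k j : 2 <= `|c k j| -> replacement_step sigma x c (mkstep sigma x c k j).
Proof. by move=> H; exists k, j; split. Qed.

Lemma step_inv sigma x c c1 : replacement_step sigma x c c1 ->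
  exists k j, 2 <= `|c k j| /\ forall k' j', c1 k' j' = mkstep sigma x c k j k' j'.
Proof. by case=> k [j [H1 H2]]; exists k, j; split. Qed.

Lemma steps_cat sigma x m n c c1 b : replacement_steps sigma x m c c1 ->
  replacement_steps sigma x n c1 b -> replacement_steps sigma x (m + n) c b.
Proof.
elim: m c => [|m IH] c /= H1 H2; first by rewrite H1.
case: H1 => c2 [Hs Hr]; exists c2; split => //; exact: IH Hr H2.
Qed.

Lemma sum_if_eq (R : nmodType) M a (F : nat -> R) : (a < M)%N ->
  \sum_(k < M) (if (k : nat) == a then F k else 0) = F a.
Proof. by move=> H; rewrite -big_mkcond (big_ord1_eq _ F a M) H. Qed.

Lemma sumn_if_eq M a : (a < M)%N -> (\sum_(k < M) ((k : nat) == a))%N = 1%N.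
Proof.
move=> H; rewrite (eq_bigr (fun k : 'I_M => if (k:nat) == a then 1%N else 0%N)).
  by rewrite -big_mkcond (big_ord1_eq _ (fun _ => 1%N) a M) H.
by move=> k _; case: eqP.
Qed.

Lemma sumn_if_le M a : (\sum_(k < M) ((k : nat) == a) <= 1)%N.
Proof.
rewrite (eq_bigr (fun k : 'I_M => if (k:nat) == a then 1%N else 0%N)).
  by rewrite -big_mkcond (big_ord1_eq _ (fun _ => 1%N) a M); case: ifP.
by move=> k _; case: eqP.
Qed.

Lemma rowW_widen c j N M : supp c N -> (N <= M)%N -> rowW c j M = rowW c j N.
Proof.
move=> Hs NM; rewrite /rowW -(subnKC NM) big_split_ord /= -[RHS]addn0; congr addn.
by apply: big1 => i _; rewrite Hs //=; left; rewrite leq_addr.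
Qed.

Lemma rowW_ge c j N k : (k < N)%N -> (`|c k j|%N <= rowW c j N)%N.
Proof.
by move=> H; rewrite /rowW (bigD1 (Ordinal H)) //= leq_addr.
Qed.

Lemma sgn_abs (c : int) : 2 <= `|c| -> `|c - 2 * sgn c| + 2 = `|c| /\ (sgn c = 1 \/ sgn c = -1).
Proof. rewrite /sgn; case: ifP => H1 H2; lia. Qed.

Lemma supp_nz c N k j : supp c N -> 2 <= `|c k j| -> (k < N)%N /\ (j < N)%N.
Proof.
move=> Hs H; split; rewrite ltnNge; apply/negP => H'; rewrite Hs in H; try lia; by [left|right].
Qed.
Lemma mk_term_j sigma x c k j k' : (sigma = 1 \/ sigma = -1) -> 2 <= `|c k j| ->
  (`|mkstep sigma x c k j k' j|%N + (k' == k) + (k' == k) <= `|c k' j|%N + (k' == k + x)%N)%N.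
Proof.
move=> hs H; have [Ha Hs] := sgn_abs H; rewrite /mkstep eqxx (ltn_eqF (ltnSn j)) !andbT !andbF.
move: Ha Hs; set s := sgn (c k j) => Ha Hs.
case: (eqVneq k' k) => [->|ne] /=.
  case: eqP => e2 /=; lia.
case: (eqVneq k' (k + x)%N) => [->|ne2] /=; lia.
Qed.

Lemma mk_term_j1 sigma x c k j k' : (sigma = 1 \/ sigma = -1) -> 2 <= `|c k j| ->
  (`|mkstep sigma x c k j k' j.+1|%N <= `|c k' j.+1|%N + (k' == k))%N.
Proof.
move=> hs H; have [Ha Hs] := sgn_abs H; rewrite /mkstep eqxx (gtn_eqF (ltnSn j)) !andbT !andbF.
move: Ha Hs; set s := sgn (c k j) => Ha Hs.
case: (eqVneq k' k) => [->|ne] /=; lia.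
Qed.

Lemma mk_other sigma x c k j k' i : i != j -> i != j.+1 -> mkstep sigma x c k j k' i = c k' i.
Proof. by move=> /negbTE h1 /negbTE h2; rewrite /mkstep h1 h2 !andbF subr0 addr0 subr0. Qed.

Lemma mk_supp sigma x c k j N : supp c N -> 2 <= `|c k j| -> supp (mkstep sigma x c k j) (N + x).+1.
Proof.
move=> Hs H k' i Hk; have [kN jN] := supp_nz Hs H.
rewrite /mkstep Hs; last by lia.
case: (eqVneq k' k) => [e1|n1]; case: (eqVneq k' (k+x)%N) => [e2|n2];
case: (eqVneq i j) => [e3|n3]; case: (eqVneq i j.+1) => [e4|n4] /=; rewrite ?subr0 ?addr0 //; lia.
Qed.

Lemma rowW_step_j sigma x c k j N : (sigma = 1 \/ sigma = -1) -> supp c N -> 2 <= `|c k j| ->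
  (rowW (mkstep sigma x c k j) j (N + x).+1 + 1 <= rowW c j N)%N.
Proof.
move=> hs Hs H; have [kN jN] := supp_nz Hs H.
rewrite -(rowW_widen j Hs (_ : N <= (N + x).+1)%N); last by lia.
have L : (\sum_(i < (N + x).+1) (`|mkstep sigma x c k j i j|%N + ((i:nat) == k) + ((i:nat) == k)) <=
   \sum_(i < (N + x).+1) (`|c i j|%N + ((i:nat) == k + x)%N))%N.
  by apply: leq_sum => i _; exact: mk_term_j.
rewrite !big_split /= !sumn_if_eq in L.
all: unfold rowW in *; try lia. by rewrite -(leq_add2r 1).
Qed.

Lemma rowW_step_j1 sigma x c k j N : (sigma = 1 \/ sigma = -1) -> supp c N -> 2 <= `|c k j| ->
  (rowW (mkstep sigma x c k j) j.+1 (N + x).+1 <= rowW c j.+1 N + 1)%N.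
Proof.
move=> hs Hs H.
rewrite -(rowW_widen j.+1 Hs (_ : N <= (N + x).+1)%N); last by lia.
have L : (\sum_(i < (N + x).+1) `|mkstep sigma x c k j i j.+1|%N <=
   \sum_(i < (N + x).+1) (`|c i j.+1|%N + ((i:nat) == k)%N))%N.
  by apply: leq_sum => i _; exact: mk_term_j1.
rewrite big_split /= in L; apply: leq_trans L _; rewrite leq_add2l; exact: sumn_if_le.
Qed.

Lemma rowproc_triv sigma x j c N : ~ (exists k, 2 <= `|c k j|) -> supp c N ->
 exists m c' N', (m <= (rowW c j N).-1)%N /\ replacement_steps sigma x m c c' /\ supp c' N' /\ (N <= N')%N /\
   (forall k i, i != j -> i != j.+1 -> c' k i = c k i) /\ (forall k, `|c' k j| <= 1) /\
   (rowW c' j.+1 N' <= rowW c j.+1 N + m)%N.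
Proof.
move=> Hn Hs; exists 0%N, c, N; do 5! split => //; split; last by rewrite addn0.
move=> k; have Hk : ~ (2 <= `|c k j|) by move=> H; apply: Hn; exists k.
lia.
Qed.

Lemma rowproc sigma x j : (sigma = 1 \/ sigma = -1) -> forall B W c N, (W <= B)%N -> supp c N -> rowW c j N = W ->
 exists m c' N', (m <= W.-1)%N /\ replacement_steps sigma x m c c' /\ supp c' N' /\ (N <= N')%N /\
   (forall k i, i != j -> i != j.+1 -> c' k i = c k i) /\ (forall k, `|c' k j| <= 1) /\
   (rowW c' j.+1 N' <= rowW c j.+1 N + m)%N.
Proof.
move=> hs; elim=> [|B IH] W c N HB Hs HW;
  (case: (classic (exists k, 2 <= `|c k j|)) => [[k Hk]|Hn]; last by rewrite -HW; exact: rowproc_triv).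
  have [kN jN] := supp_nz Hs Hk; have := rowW_ge c j kN; lia.
have [kN jN] := supp_nz Hs Hk; have W2 := rowW_ge c j kN.
have L1 := rowW_step_j x hs Hs Hk.
have L2 := rowW_step_j1 x hs Hs Hk.
have S1 := mk_supp sigma (x:=x) Hs Hk.
have [|m1 [c' [N' [Hm [Hst [Hs' [HN [Hun [Hj Hj1]]]]]]]]] :=
  IH (rowW (mkstep sigma x c k j) j (N + x).+1) (mkstep sigma x c k j) (N + x).+1 _ S1 erefl.
  lia.
exists m1.+1, c', N'; split; first lia.
split; first by exists (mkstep sigma x c k j); split => //; exact: step_mk.
split => //; split; first lia.
split; first by move=> k0 i h1 h2; rewrite Hun // mk_other.
split => //.
lia.
Qed.

Lemma allrows_triv sigma x j c N : supp c N -> rowW c j N = 0%N ->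
  (forall k i, (i < j)%N -> `|c k i| <= 1) -> (forall k i, (j < i)%N -> c k i = 0) ->
  exists n b, (n <= 'C(0,2))%N /\ replacement_steps sigma x n c b /\ forall k i, `|b k i| <= 1.
Proof.
move=> Hs HW Hlo Hhi; exists 0%N, c; do 2! split => //.
move=> k i; case: (ltngtP i j) => [h|h|->]; first exact: Hlo.
  by rewrite Hhi.
case: (ltnP k N) => h; last by rewrite Hs //; left.
have := rowW_ge c j h; rewrite HW; lia.
Qed.

Lemma allrows sigma x : (sigma = 1 \/ sigma = -1) -> forall B W j c N, (W <= B)%N -> supp c N -> rowW c j N = W ->
  (forall k i, (i < j)%N -> `|c k i| <= 1) -> (forall k i, (j < i)%N -> c k i = 0) ->
  exists n b, (n <= 'C(W,2))%N /\ replacement_steps sigma x n c b /\ forall k i, `|b k i| <= 1.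
Proof.
move=> hs; elim=> [|B IH] W j c N HB Hs HW Hlo Hhi.
  have W0 : W = 0%N by lia.
  by rewrite W0 in HW *; exact: allrows_triv Hs HW Hlo Hhi.
case: W HB HW => [|W0] HB HW; first exact: allrows_triv Hs HW Hlo Hhi.
have [m [c1 [N1 [Hm [Hst [Hs1 [HN [Hun [Hj Hj1]]]]]]]]] := rowproc x hs (leqnn W0.+1) Hs HW.
have R0 : rowW c j.+1 N = 0%N by apply: big1 => i _; rewrite Hhi.
have B1 : (rowW c1 j.+1 N1 <= B)%N by lia.
have Lo : forall k i, (i < j.+1)%N -> `|c1 k i| <= 1.
  move=> k i; rewrite ltnS leq_eqVlt => /orP [/eqP ->|h]; first exact: Hj.
  have e1 : i != j by rewrite ltn_eqF.
  have e2 : i != j.+1 by rewrite ltn_eqF // ltnW.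
  rewrite Hun //; exact: Hlo.
have Hi : forall k i, (j.+1 < i)%N -> c1 k i = 0.
  move=> k i h.
  have e1 : i != j by rewrite gtn_eqF // ltnW.
  have e2 : i != j.+1 by rewrite gtn_eqF.
  rewrite Hun //; apply: Hhi; lia.
have [n' [b [Hn [Hst' Hb]]]] := IH (rowW c1 j.+1 N1) j.+1 c1 N1 B1 Hs1 erefl Lo Hi.
exists (m + n')%N, b; split; last by split => //; exact: steps_cat Hst Hst'.
rewrite binS bin1.
have := leq_bin2l 2 (_ : rowW c1 j.+1 N1 <= W0)%N.
lia.
Qed.

Lemma point_sum (p q : int) y M a b v : (a < M)%N -> (b < M)%N ->
  \sum_(i < M) \sum_(k < M) (if ((k:nat) == a) && ((i:nat) == b) then v else 0) * (q ^+ (i * y) * p ^+ k)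
  = v * (q ^+ (b * y) * p ^+ a).
Proof.
move=> ha hb.
rewrite (eq_bigr (fun i : 'I_M => if (i:nat) == b then v * (q ^+ (i * y) * p ^+ a) else 0)).
  by rewrite (sum_if_eq (fun i => v * (q ^+ (i * y) * p ^+ a)) hb).
move=> i _; case: eqP => _.
  rewrite (eq_bigr (fun k : 'I_M => if (k:nat) == a then v * (q ^+ (i * y) * p ^+ k) else 0)).
    by rewrite (sum_if_eq (fun k => v * (q ^+ (i * y) * p ^+ k)) ha).
  by move=> k _; rewrite andbT; case: eqP => _; rewrite ?mul0r.
by apply: big1 => k _; rewrite andbF mul0r.
Qed.

Lemma val_step (p q : int) x y sigma c c1 N M : 2 = sigma * (p ^+ x - q ^+ y) ->
  replacement_step sigma x c c1 -> supp c N -> ((N + x).+1 <= M)%N ->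
  val p q y c1 M = val p q y c M /\ supp c1 (N + x).+1.
Proof.
move=> h2 Hst Hs HM; have [k [j [Hk Heq]]] := step_inv Hst.
have [kN jN] := supp_nz Hs Hk.
split; last by move=> k' i' H; rewrite Heq; exact: mk_supp Hs Hk _ _ H.
rewrite /val.
set s := sgn (c k j).
have E : forall (i k' : 'I_M), c1 k' i * (q ^+ (i * y) * p ^+ k') =
  c k' i * (q ^+ (i * y) * p ^+ k')
  - (if ((k':nat) == k) && ((i:nat) == j) then 2 * s else 0) * (q ^+ (i * y) * p ^+ k')
  + (if ((k':nat) == (k + x)%N) && ((i:nat) == j) then s * sigma else 0) * (q ^+ (i * y) * p ^+ k')
  - (if ((k':nat) == k) && ((i:nat) == j.+1) then s * sigma else 0) * (q ^+ (i * y) * p ^+ k').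
  by move=> i k0; rewrite Heq /mkstep -/s; ring.
under eq_bigr => i _ do under eq_bigr => k' _ do rewrite E.
under eq_bigr => i _ do rewrite sumrB big_split sumrB /=.
rewrite sumrB big_split sumrB /= !point_sum //; try lia.
rewrite exprD mulSn exprD.
set T := \sum_(i < M) _.
have -> : T - 2 * s * (q ^+ (j * y) * p ^+ k) + s * sigma * (q ^+ (j * y) * (p ^+ k * p ^+ x)) -
  s * sigma * (q ^+ y * q ^+ (j * y) * p ^+ k) =
  T + s * (q ^+ (j * y) * p ^+ k) * (sigma * (p ^+ x - q ^+ y) - 2) by ring.
by rewrite -h2 subrr mulr0 addr0.
Qed.

Lemma val_steps (p q : int) x y sigma : 2 = sigma * (p ^+ x - q ^+ y) ->
  forall n c b N, replacement_steps sigma x n c b -> supp c N ->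
  (forall M, (N + n * x.+1 <= M)%N -> val p q y b M = val p q y c M) /\ supp b (N + n * x.+1).
Proof.
move=> h2; elim=> [|n IH] c b N /=.
  by move=> <- Hs; rewrite mul0n addn0.
move=> [c2 [Hst Hr]] Hs.
have [_ Hs2] := val_step (M:=(N+x).+1) h2 Hst Hs (leqnn _).
have [IHv IHs] := IH c2 b (N+x).+1 Hr Hs2.
have E : ((N + x).+1 + n * x.+1 = N + n.+1 * x.+1)%N by rewrite mulSn; lia.
split; last by rewrite -E.
move=> M hM; rewrite IHv ?E //.
have hM' : ((N + x).+1 <= M)%N by move: hM; rewrite mulSn; lia.
by have [-> _] := val_step (M:=M) h2 Hst Hs hM'.
Qed.

Lemma sum_widen (F : nat -> int) n m : (n <= m)%N -> (forall k, (n <= k)%N -> F k = 0) ->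
  \sum_(k < m) F k = \sum_(k < n) F k.
Proof.
move=> NM Hs; rewrite -(subnKC NM) big_split_ord /= -[RHS]addr0; congr (_ + _).
by apply: big1 => i _; rewrite Hs // leq_addr.
Qed.

Unset Implicit Arguments. Set Strict Implicit.

Theorem mainTheorem5 (p q : int) (x y : nat) (sigma : int)
    (hsigma : sigma = 1 \/ sigma = -1)
    (h2 : 2 = sigma * (p ^+ x - q ^+ y))
    (I : nat) (a : nat -> int) :
  let alpha := \sum_(i < I.+1) a i * p ^+ i in
  let w := (\sum_(i < I.+1) `|a i|%N)%N in
  exists (n : nat) (b : rep) (J K : nat),
    (n <= (w * w - w) %/ 2)%N /\
    replacement_steps sigma x n (initial_rep a I) b /\
    (forall k j : nat, (K < k)%N \/ (J < j)%N -> b k j = 0) /\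
    (forall k j : nat, `|b k j| <= 1) /\
    alpha = \sum_(j < J.+1) q ^+ (j * y) * \sum_(k < K.+1) b k j * p ^+ k.
Proof.
move=> alpha w.
set c0 := initial_rep a I.
have S0 : supp c0 I.+1.
  move=> k i H; rewrite /c0 /initial_rep.
  case: (eqVneq i 0%N) => [e|ne] /=; last by [].
  by rewrite ifF //; apply/negbTE; rewrite -ltnNge; case: H => //; rewrite e.
have W0 : rowW c0 0 I.+1 = w.
  by apply: eq_bigr => k _; rewrite /c0 /initial_rep /= -ltnS ltn_ord.
have Lo : forall k i, (i < 0)%N -> `|c0 k i| <= 1 by [].
have Hi : forall k i, (0 < i)%N -> c0 k i = 0.
  by move=> k i h; rewrite /c0 /initial_rep gtn_eqF.
have [n [b [Hn [Hst Hb]]]] := allrows x hsigma (leqnn w) S0 W0 Lo Hi.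
have [Hv Hsb] := val_steps h2 Hst S0.
set M0 := (I.+1 + n * x.+1)%N in Hv Hsb.
exists n, b, M0, M0; split.
  have -> : (w * w - w = w * w.-1)%N by rewrite -subn1 mulnBr muln1.
  by rewrite divn2 -bin2.
split => //; split.
  by move=> k j h; apply: Hsb; case: h => h; [left|right]; exact: ltnW.
split => //.
have -> : \sum_(j < M0.+1) q ^+ (j * y) * \sum_(k < M0.+1) b k j * p ^+ k = val p q y b M0.+1.
  apply: eq_bigr => j _; rewrite mulr_sumr; apply: eq_bigr => k _; exact: mulrCA.
rewrite Hv //.
rewrite /val big_ord_recl /= [X in _ + X]big1 ?addr0; last first.
  by move=> i _; apply: big1 => k _; rewrite Hi ?mul0r.
rewrite mul0n expr0.
under eq_bigr => k _ do rewrite mul1r.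
rewrite (@sum_widen (fun k => c0 k 0%N * p ^+ k) I.+1 M0.+1).
- by apply: eq_bigr => k _; rewrite /c0 /initial_rep /= -ltnS ltn_ord.
- by rewrite /M0; lia.
- by move=> k h; rewrite S0 ?mul0r //; left.
Qed.
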